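(* Let $K,T\subset\mathbb{R}^n$ be convex polytopes (containing the origin in their interiors), let $F_1,\dots,F_m$ be faces of $K$ and $G_1,\dots,G_m$ faces of $T$. Let $q=(q_1,\dots,q_m)$, $q'=(q_1',\dots,q_m')$ be closed polygonal curves with vertices on $\partial K$ and $p=(p_1,\dots,p_m)$, $p'=(p_1',\dots,p_m')$ closed polygonal curves with vertices on $\partial T$ such that for all $j$ (indices mod $m$) $$q_{j+1}-q_j\in N_T(p_j),\quad p_{j+1}-p_j\in -N_K(q_{j+1}),\quad q'_{j+1}-q'_j\in N_T(p'_j),\quad p'_{j+1}-p'_j\in -N_K(q'_{j+1}).$$ Assume that for each $j$, $q_j,q_j'\in\operatorname{relint}(F_j)$ if $F_j$ is not a vertex and $q_j,q_j'\in F_j$ if $F_j$ is a vertex, and likewise $p_j,p_j'\in\operatorname{relint}(G_j)$ if $G_j$ is not a vertex and $p_j,p'_j\in G_j$ if $G_j$ is a vertex. Then $\ell_T(q)=\ell_T(q')$.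
   Context: For a convex body $T$ (compact convex set with the origin in its interior), $T^\circ$ is its polar body and $\mu_{T^\circ}(x)=\min\{t\ge 0: x\in tT^\circ\}$ (equal to $h_T(x)=\max_{y\in T}\langle x,y\rangle$). For a convex set $C$ and $z\in\partial C$, $N_C(z)=\{v:\langle v,y-z\rangle\le 0\ \forall y\in C\}$. For a closed polygonal curve $q=(q_1,\dots,q_m)$ (indices mod $m$), $\ell_T(q)=\sum_{j=1}^m\mu_{T^\circ}(q_{j+1}-q_j)$. $\operatorname{relint}$ denotes relative interior. *)

(* Defs.v *)
From HB Require Import structures.
From mathcomp Require Import all_boot all_order all_algebra.
From mathcomp Require Import boolp classical_sets reals.
Set Implicit Arguments. Unset Strict Implicit. Unset Printing Implicit Defensive.
Import Order.TTheory GRing.Theory Num.Theory.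
Local Open Scope ring_scope.
Local Open Scope classical_set_scope.

Section Defs.
Variables (R : realType) (n : nat).
Local Notation vec := 'rV[R]_n.

Definition dot (u v : vec) : R := \sum_(i < n) u ord0 i * v ord0 i.

Definition interior_pt (C : set vec) (x : vec) : Prop :=
  exists2 e : R, 0 < e & forall y, dot (y - x) (y - x) < e -> C y.
Definition boundary_pt (C : set vec) (x : vec) : Prop :=
  C x /\ ~ interior_pt C x.

Definition conv_hull (k : nat) (v : 'I_k -> vec) : set vec :=
  [set x | exists w : 'I_k -> R, (forall i, 0 <= w i) /\
     \sum_(i < k) w i = 1 /\ x = \sum_(i < k) w i *: v i].

Definition polytope0 (K : set vec) : Prop :=
  (exists (k : nat) (v : 'I_k -> vec), K = conv_hull v) /\ interior_pt K 0.

Definition convex_set (C : set vec) : Prop :=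
  forall x y (t : R), C x -> C y -> 0 <= t <= 1 -> C ((1 - t) *: x + t *: y).

Definition is_face (K F : set vec) : Prop :=
  F `<=` K /\ convex_set F /\
  forall x y (t : R), K x -> K y -> 0 < t < 1 ->
    F ((1 - t) *: x + t *: y) -> F x /\ F y.

Definition is_vertex (F : set vec) : Prop := exists v, F = [set v].

Definition aff_hull (F : set vec) : set vec :=
  [set y | exists (k : nat) (c : 'I_k -> vec) (w : 'I_k -> R),
     (forall i, F (c i)) /\ \sum_(i < k) w i = 1 /\ y = \sum_(i < k) w i *: c i].
Definition relint (F : set vec) : set vec :=
  [set x | F x /\ exists2 e : R, 0 < e &
     forall y, aff_hull F y -> dot (y - x) (y - x) < e -> F y].

Definition normal_cone (C : set vec) (z : vec) : set vec :=
  [set v | forall y, C y -> dot v (y - z) <= 0].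

Definition polar (T : set vec) : set vec :=
  [set x | forall y, T y -> dot x y <= 1].
Definition gauge (C : set vec) (x : vec) : R :=
  inf [set t : R | 0 <= t /\ exists z, C z /\ x = t *: z].

Definition ellT (T : set vec) (m : nat) (q : nat -> vec) : R :=
  \sum_(j < m) gauge (polar T) (q (j.+1 %% m)%N - q j).

Definition face_cond (F : set vec) (x : vec) : Prop :=
  if `[< is_vertex F >] then F x else relint F x.

End Defs.

(* Main.v *)
Require Import Defs.
From HB Require Import structures.
From mathcomp Require Import all_boot all_order all_algebra.
From mathcomp Require Import boolp classical_sets reals.
From mathcomp Require Import lra.
Import Order.TTheory GRing.Theory Num.Theory.
Local Open Scope ring_scope.
Local Open Scope classical_set_scope.
Set Implicit Arguments. Unset Strict Implicit.

Section L.
Variables (R : realType) (n : nat).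
Local Notation vec := 'rV[R]_n.

Lemma dotC (u v : vec) : dot u v = dot v u.
Proof. by rewrite /dot; apply: eq_bigr => i _; rewrite mulrC. Qed.
Lemma dotDl (u v w : vec) : dot (u + v) w = dot u w + dot v w.
Proof. by rewrite /dot -big_split; apply: eq_bigr => i _; rewrite mxE mulrDl. Qed.
Lemma dotZl a (u w : vec) : dot (a *: u) w = a * dot u w.
Proof. by rewrite /dot mulr_sumr; apply: eq_bigr => i _; rewrite mxE mulrA. Qed.
Lemma dotNl (u w : vec) : dot (- u) w = - dot u w.
Proof. by rewrite /dot -sumrN; apply: eq_bigr => i _; rewrite mxE mulNr. Qed.
Lemma dotBl (u v w : vec) : dot (u - v) w = dot u w - dot v w.
Proof. by rewrite dotDl dotNl. Qed.
Lemma dotDr (u v w : vec) : dot w (u + v) = dot w u + dot w v.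
Proof. by rewrite dotC dotDl !(dotC w). Qed.
Lemma dotZr a (u w : vec) : dot w (a *: u) = a * dot w u.
Proof. by rewrite dotC dotZl (dotC w). Qed.
Lemma dotBr (u v w : vec) : dot w (u - v) = dot w u - dot w v.
Proof. by rewrite dotC dotBl !(dotC w). Qed.
Lemma dot0r (w : vec) : dot w 0 = 0.
Proof. by rewrite /dot big1 // => i _; rewrite mxE mulr0. Qed.
Lemma dot_ge0 (u : vec) : 0 <= dot u u.
Proof. by rewrite /dot sumr_ge0 // => i _; rewrite -expr2 sqr_ge0. Qed.

Lemma face_eq (C F : set vec) z z' v : F `<=` C -> normal_cone C z v ->
  face_cond F z -> face_cond F z' -> dot v z' = dot v z.
Proof.
move=> FC Hn; rewrite /face_cond; case: asboolP => [[w ->] Hz Hz' | _].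
  by have -> : z = w := Hz; have -> : z' = w := Hz'.
move=> [Fz [e e0 He]] [Fz' _].
have h1 := Hn z' (FC _ Fz'); rewrite dotBr in h1.
set D := dot (z - z') (z - z').
have D0 : 0 <= D by exact: dot_ge0.
set t := e / (D + e).
have t0 : 0 < t by rewrite divr_gt0 // ltr_wpDl.
have t1 : t <= 1 by rewrite ler_pdivrMr ?ltr_wpDl // mul1r lerDr.
have tD : t * D < e.
  rewrite /t mulrAC ltr_pdivrMr ?ltr_wpDl // mulrDr.
  by rewrite ltrDl mulr_gt0.
pose y := (1 + t) *: z - t *: z'.
have yz : y - z = t *: (z - z').
  by rewrite /y scalerBr scalerDl scale1r addrAC (addrC z) addrK.
have Fy : F y.
  apply: He.
    exists 2%N, (fun i : 'I_2 => if val i == 0%N then z else z'),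
      (fun i : 'I_2 => if val i == 0%N then 1 + t else - t).
    split; first by move=> i; case: ifP => _.
    rewrite !big_ord_recl !big_ord0 /= !addr0; split; first by rewrite addrK.
    by rewrite /y scaleNr.
  rewrite yz dotZl dotZr mulrA.
  have : t * t * D <= t * D by rewrite ler_wpM2r // ger_pMl.
  by move=> h; apply: le_lt_trans h tD.
have h2 := Hn y (FC _ Fy); rewrite yz dotZr dotBr in h2.
have h3 : dot v z - dot v z' <= 0.
  by move: h2; rewrite pmulr_rle0.
lra.
Qed.

Lemma gauge_eq (T : set vec) x p : interior_pt T 0 -> T p -> normal_cone T p x ->
  gauge (polar T) x = dot x p.
Proof.
move=> [e e0 He] Tp Hn.
have T0 : T 0 by apply: He; rewrite subr0 dot0r.
have a0 : 0 <= dot x p by have := Hn 0 T0; rewrite dotBr dot0r; lra.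
rewrite /gauge; set S := [set t | _].
have inS : forall t, dot x p < t -> S t.
  move=> t lt; have t0 : 0 < t by apply: le_lt_trans lt.
  split; first exact: ltW.
  exists (t^-1 *: x); split; last by rewrite scalerA mulfV ?gt_eqF // scale1r.
  move=> y Ty; rewrite dotZl ler_pdivrMl // mulr1.
  have := Hn y Ty; rewrite dotBr => h.
  apply: le_trans (ltW lt); lra.
have lb : lbound S (dot x p).
  move=> t [t0 [z [Pz ->]]]; rewrite dotZl.
  by have := Pz p Tp; move=> h; rewrite -[leRHS]mulr1 ler_wpM2l.
have hl : has_lbound S by exists (dot x p).
apply/eqP; rewrite eq_le; apply/andP; split; last first.
  apply: lb_le_inf => //; exists (dot x p + 1); apply: inS; lra.
rewrite leNgt; apply/negP => hlt.
have := ge_inf hl (inS ((dot x p + inf S) / 2) _).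
have : dot x p < (dot x p + inf S) / 2 by lra.
move=> h1; move/(_ h1) => h2; lra.
Qed.

Lemma cyc_sum (g : nat -> R) m : \sum_(j < m) g (j.+1 %% m)%N = \sum_(j < m) g j.
Proof.
case: m => [|k]; first by rewrite !big_ord0.
rewrite big_ord_recr big_ord_recl /= modnn addrC; congr (_ + _).
by apply: eq_bigr => i _; rewrite modn_small //= ltnS.
Qed.
End L.

Theorem proposition7p1 (R : realType) (n : nat) (K T : set 'rV[R]_n)
  (m : nat) (F G : nat -> set 'rV[R]_n) (q q' p p' : nat -> 'rV[R]_n) :
  polytope0 K -> polytope0 T ->
  (forall j, (j < m)%N -> is_face K (F j)) ->
  (forall j, (j < m)%N -> is_face T (G j)) ->
  (forall j, (j < m)%N -> boundary_pt K (q j) /\ boundary_pt K (q' j)) ->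
  (forall j, (j < m)%N -> boundary_pt T (p j) /\ boundary_pt T (p' j)) ->
  (forall j, (j < m)%N ->
     normal_cone T (p j) (q (j.+1 %% m)%N - q j) /\
     normal_cone K (q (j.+1 %% m)%N) (- (p (j.+1 %% m)%N - p j)) /\
     normal_cone T (p' j) (q' (j.+1 %% m)%N - q' j) /\
     normal_cone K (q' (j.+1 %% m)%N) (- (p' (j.+1 %% m)%N - p' j))) ->
  (forall j, (j < m)%N ->
     face_cond (F j) (q j) /\ face_cond (F j) (q' j) /\
     face_cond (G j) (p j) /\ face_cond (G j) (p' j)) ->
  ellT T m q = ellT T m q'.
Proof.
move=> _ [_ T0] HF HG _ Hp Hn Hc.
have E1 : ellT T m q = \sum_(j < m) dot (q (j.+1 %% m)%N - q j) (p' j).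
  apply: eq_bigr => j _; have jm := ltn_ord j.
  have [Hn1 [_ [_ _]]] := Hn j jm; have [_ [_ [c1 c2]]] := Hc j jm.
  rewrite (gauge_eq T0 (proj1 (proj1 (Hp j jm))) Hn1).
  by rewrite (face_eq (proj1 (HG j jm)) Hn1 c1 c2).
have E2 : ellT T m q' = \sum_(j < m) dot (q' (j.+1 %% m)%N - q' j) (p' j).
  apply: eq_bigr => j _; have jm := ltn_ord j.
  have [_ [_ [Hn1 _]]] := Hn j jm.
  by rewrite (gauge_eq T0 (proj1 (proj2 (Hp j jm))) Hn1).
pose g j := dot (q j - q' j) (p' j).
rewrite E1 E2; apply/eqP; rewrite -subr_eq0 -sumrB.
have -> : \sum_(j < m) (dot (q (j.+1 %% m)%N - q j) (p' j) -
     dot (q' (j.+1 %% m)%N - q' j) (p' j)) =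
     \sum_(j < m) (g (j.+1 %% m)%N - g j).
  apply: eq_bigr => j _; have jm := ltn_ord j.
  have sm : (j.+1 %% m < m)%N by rewrite ltn_pmod // (leq_ltn_trans _ jm).
  have [_ [_ [_ Hn1]]] := Hn j jm; have [c1 [c2 _]] := Hc _ sm.
  have := face_eq (proj1 (HF _ sm)) Hn1 c2 c1.
  rewrite /g !dotNl !dotBl !(dotC (p' _)).
  move=> h; lra.
by rewrite sumrB cyc_sum subrr.
Qed.
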